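(* Let $\mathcal B$ be a weak $\mathfrak b$-scale, $s\in\omega^{<\omega}$ and $f\in\mathcal B$. (1) If $s\in U(f)$, then $s^\frown\triangle_{f(s)}\subseteq U(f)$, where $s^\frown F=\{s^\frown z: z\in F\}$. (2) The set $\{g\in\mathcal B: s\in U(g)\}$ is cofinal in $(\mathcal B,\le^* )$.
   Context: For $m\in\omega$ let $\triangle_m=m^{\le m}$ (finite sequences of length at most $m$ with entries $<m$). A function $f:\omega^{<\omega}\to\omega$ is increasing if $f(s)<f(t)$ whenever $s$ is a proper initial segment of $t$, and $f(s^\frown n)<f(s^\frown m)$ whenever $n<m$. For $f,g:\omega^{<\omega}\to\omega$, $f\le^* g$ means $f(s)\le g(s)$ for all but finitely many $s$. A family $\mathcal B$ of functions $\omega^{<\omega}\to\omega$ is a weak $\mathfrak b$-scale if (a) every member is increasing, (b) there is no $g$ with $f\le^* g$ for all $f\in\mathcal B$, (c) $\mathcal B$ is well-ordered by $\le^*$, (d) for every $n\in\omega$ the set $\{f\in\mathcal B: n<f(\emptyset)\}$ is cofinal in $(\mathcal B,\le^* )$. For $f:\omega^{<\omega}\to\omega$, $U(f)\subseteq\omega^{<\omega}$ is the tree defined by: $\emptyset\in U(f)$, and for $s\in U(f)$, $s^\frown k\in U(f)$ iff $k\ne f(s)$. *)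

(* Defs.v *)
From mathcomp Require Import all_boot.
Set Implicit Arguments. Unset Strict Implicit. Unset Printing Implicit Defensive.

Definition fn := seq nat -> nat.

(* triangle_m = m^{<= m}: sequences of length <= m with entries < m *)
Definition in_triangle (m : nat) (z : seq nat) : bool :=
  (size z <= m) && all (fun k => k < m) z.

Definition proper_prefix (s t : seq nat) : bool := prefix s t && (s != t).

Definition increasing (f : fn) : Prop :=
  (forall s t, proper_prefix s t -> f s < f t) /\
  (forall s n m, n < m -> f (rcons s n) < f (rcons s m)).

Definition le_star (f g : fn) : Prop :=
  exists l : seq (seq nat), forall s, g s < f s -> s \in l.

Definition cofinal (B C : fn -> Prop) : Prop :=
  (forall g, C g -> B g) /\ (forall f, B f -> exists2 g, C g & le_star f g).

Definition well_ordered_star (B : fn -> Prop) : Prop :=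
  (forall f, B f -> le_star f f) /\
  (forall f g, B f -> B g -> le_star f g -> le_star g f -> f = g) /\
  (forall f g h, B f -> B g -> B h -> le_star f g -> le_star g h -> le_star f h) /\
  (forall f g, B f -> B g -> le_star f g \/ le_star g f) /\
  (forall A : fn -> Prop, (forall f, A f -> B f) -> (exists f, A f) ->
     exists2 f, A f & forall g, A g -> le_star f g).

Definition weak_b_scale (B : fn -> Prop) : Prop :=
  (forall f, B f -> increasing f) /\
  ~ (exists g : fn, forall f, B f -> le_star f g) /\
  well_ordered_star B /\
  (forall n : nat, cofinal B (fun f => B f /\ n < f [::])).

Inductive inU (f : fn) : seq nat -> Prop :=
| inU_nil : inU f [::]
| inU_rcons s k : inU f s -> k != f s -> inU f (rcons s k).

(* Main.v *)
Require Import Defs.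
From mathcomp Require Import all_boot.

Lemma incr_prefix (g : fn) s t : increasing g -> prefix s t -> g s <= g t.
Proof.
move=> [H _] p; case: (eqVneq s t) => [->//|ne].
by apply: ltnW; apply: H; rewrite /proper_prefix p ne.
Qed.

Lemma mem_le_sumn (s : seq nat) k : k \in s -> k <= sumn s.
Proof.
elim: s => //= a s IH; rewrite in_cons => /orP [/eqP ->|/IH h].
  exact: leq_addr.
by apply: (leq_trans h); apply: leq_addl.
Qed.

Lemma inU_small (g : fn) s : increasing g ->
  (forall k, k \in s -> k < g [::]) -> inU g s.
Proof.
move=> Hg; elim/last_ind: s => [_|t k IH H]; first by constructor.
constructor.
  by apply: IH => x hx; apply: H; rewrite mem_rcons in_cons hx orbT.
have hk : k < g [::] by apply: H; rewrite mem_rcons in_cons eqxx.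
have := @incr_prefix g [::] t Hg (prefix0s t).
by move=> h; rewrite neq_ltn (leq_trans hk h).
Qed.

Theorem lemma22 (B : fn -> Prop) (s : seq nat) (f : fn) :
  weak_b_scale B -> B f ->
  (inU f s -> forall z, in_triangle (f s) z -> inU f (s ++ z)) /\
  cofinal B (fun g => B g /\ inU g s).
Proof.
move=> [Hinc [_ [_ Hcof]]] Bf; split.
  move=> Us z; elim/last_ind: z => [_|z k IH]; first by rewrite cats0.
  move=> /andP [Hs Ha].
  have hz : in_triangle (f s) z.
    rewrite /in_triangle; apply/andP; split.
      by apply: leq_trans Hs; rewrite size_rcons.
    by apply/allP => x hx; move/allP: Ha; apply; rewrite mem_rcons in_cons hx orbT.
  have hk : k < f s by move/allP: Ha; apply; rewrite mem_rcons in_cons eqxx.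
  rewrite -rcons_cat; constructor; first exact: IH.
  have := @incr_prefix f s (s ++ z) (Hinc f Bf) (prefix_prefix s z).
  by move=> h; rewrite neq_ltn (leq_trans hk h).
split; first by move=> g [].
move=> h Bh; have [_ C] := Hcof (sumn s).
have [g [Bg Hn] hg] := C h Bh.
exists g => //; split => //.
apply: inU_small; first exact: Hinc.
by move=> k hk; exact: (leq_ltn_trans (@mem_le_sumn s k hk) Hn).
Qed.
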